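(* Let $T$ be a finite tree rooted at a vertex $v$ and let $M_0$ be a dominating set of $T$ such that (a) no parent of a supported vertex of $M_0$ lies in $M_0$, and (b) no supported vertex of $M_0$ is a descendant of another supported vertex of $M_0$. Then Algorithm 1 (described below), applied to $T$ rooted at $v$ and $M_0$, terminates and outputs a minimal dominating set $M_i$ with $|M_i|\ge |M_0|$ (for any choices made during the algorithm). Algorithm 1: set $i=0$; while $M_i$ is not a minimal dominating set: choose a supported vertex $u_i\in M_i\setminus a(M_i)$ of least depth; let $A_{i+1}$ be the set of vertices of $a_1(M_i)$ adjacent to $u_i$; let $N_{i+1}$ be the set of vertices of $N_1(M_i)$ adjacent to a vertex of $A_{i+1}$; set $M_{i+1}=(M_i\setminus A_{i+1})\cup N_{i+1}$ and increase $i$ by one. When the loop ends, return $M_i$.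
   Context: A dominating set of a graph $G=(V,E)$ is a set $S\subseteq V$ such that every vertex is in $S$ or adjacent to a vertex of $S$; it is minimal if no proper subset is dominating. $N[u]=N(u)\cup\{u\}$ is the closed neighbourhood. For a dominating set $S$: $a(S)=\{u\in S: S\setminus\{u\}\text{ is not dominating}\}$ (critical vertices); vertices of $S\setminus a(S)$ are called supported; $N_1(S)=\{u\in V\setminus S: |N[u]\cap S|=1\}$; $a_1(S)=\{u\in a(S): N[u]\cap N_1(S)\ne\emptyset\}$. In a tree rooted at $v$, depth is the distance to $v$; $x$ is a descendant of $y$ if $y$ lies on the path from $x$ to $v$; the parent of $x\neq v$ is its neighbour on that path. *)

(* Defs.v *)
From mathcomp Require Import all_boot.
From Stdlib Require Export Relations.Relation_Operators.
Set Implicit Arguments. Unset Strict Implicit. Unset Printing Implicit Defensive.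

Section Defs.
Variables (T : finType) (e : rel T).

Definition is_tree : Prop :=
  symmetric e /\ irreflexive e /\ (forall x y : T, connect e x y) /\
  (forall c : seq T, uniq c -> 2 < size c -> ~~ cycle e c).

Definition cnbhd (u : T) : {set T} := [set y | (y == u) || e u y].

Definition dominating (S : {set T}) : bool :=
  [forall x, cnbhd x :&: S != set0].

Definition minimal_dominating (S : {set T}) : Prop :=
  dominating S /\ forall S' : {set T}, S' \proper S -> ~~ dominating S'.

(* a(S): critical vertices *)
Definition crit (S : {set T}) : {set T} := [set u in S | ~~ dominating (S :\ u)].
Definition supported (S : {set T}) : {set T} := S :\: crit S.
Definition N1 (S : {set T}) : {set T} :=
  [set u in ~: S | #|cnbhd u :&: S| == 1].
Definition a1 (S : {set T}) : {set T} :=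
  [set u in crit S | cnbhd u :&: N1 S != set0].

Variable v : T.

Definition dist_le (x y : T) (n : nat) : Prop :=
  exists p : seq T, size p <= n /\ path e x p /\ last x p = y.

(* depth u <= depth w, i.e. dist(v,u) <= dist(v,w) *)
Definition depth_le (u w : T) : Prop :=
  forall n, dist_le v w n -> dist_le v u n.

(* y lies on the (unique simple) path from x to the root v *)
Definition descendant (x y : T) : Prop :=
  forall p : seq T, path e x p -> last x p = v -> uniq (x :: p) -> y \in x :: p.

Definition parent_of (x y : T) : Prop := x != v /\ e x y /\ descendant x y.

Definition alg_step (M M' : {set T}) : Prop :=
  ~ minimal_dominating M /\
  exists u : T,
    u \in supported M /\
    (forall w, w \in supported M -> depth_le u w) /\
    let A := [set x in a1 M | e u x] in
    let N := [set y in N1 M | [exists x in A, e y x]] in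
    M' = (M :\: A) :|: N.

End Defs.

(* Main.v *)
Require Import Defs.
From mathcomp Require Import all_boot.
From mathcomp Require Import zify.
From Stdlib Require Import Relations.Relation_Operators.

Set Implicit Arguments.
Unset Strict Implicit.
Section Tree.
Variables (T : finType) (e : rel T) (v : T).
Hypothesis esym : symmetric e.
Hypothesis eirr : irreflexive e.
Hypothesis econn : forall x y, connect e x y.
Hypothesis eacyc : forall c : seq T, uniq c -> 2 < size c -> ~~ cycle e c.

Definition dle (x : T) (n : nat) : bool :=
  [exists k : 'I_n.+1, [exists t : k.-tuple T, path e v t && (last v t == x)]].

Lemma dleP x n : reflect (exists p : seq T, size p <= n /\ path e v p /\ last v p = x) (dle x n).
Proof.
apply: (iffP existsP) => [[k /existsP [t /andP [pt /eqP lt]]]|[s [sz [ps ls]]]].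
  by exists t; rewrite size_tuple -ltnS; split.
have sz' : size s < n.+1 by rewrite ltnS.
exists (Ordinal sz'); apply/existsP; exists (in_tuple s) => /=.
by rewrite ps ls eqxx.
Qed.

Lemma dle_ex x : exists n, dle x n.
Proof.
have /connectP [p pp lp] := econn v x.
by exists (size p); apply/dleP; exists p.
Qed.

Definition d x := ex_minn (dle_ex x).

Lemma dleD x : dle x (d x).
Proof. by rewrite /d; case: ex_minnP. Qed.

Lemma d_min x n : dle x n -> d x <= n.
Proof. by rewrite /d; case: ex_minnP => m _ H /H. Qed.

Lemma d_v : d v = 0.
Proof. apply/eqP; rewrite -leqn0; apply: d_min; apply/dleP; by exists [::]. Qed.

Lemma d0 x : d x = 0 -> x = v.
Proof.
move=> H; have /dleP [p [sp [_ lp]]] := dleD x.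
by move: sp; rewrite H leqn0 => /nilP Hp; move: lp; rewrite Hp.
Qed.

Lemma d_edge x y : e x y -> d y <= (d x).+1.
Proof.
move=> exy; have /dleP [p [sp [pp lp]]] := dleD x.
apply: d_min; apply/dleP; exists (rcons p y); rewrite size_rcons ltnS sp.
by rewrite rcons_path pp lp exy last_rcons.
Qed.

Lemma d_par_ex x : x != v -> exists2 y, e x y & (d y).+1 = d x.
Proof.
move=> xv; have /dleP [p [sp [pp lp]]] := dleD x.
move: sp pp lp; case/lastP: p => [|p z]; first by move=> _ _ /= H; rewrite H eqxx in xv.
rewrite size_rcons rcons_path last_rcons => sp /andP [pp ez] zx.
subst z; exists (last v p); first by rewrite esym.
have h1 : d (last v p) <= size p by apply: d_min; apply/dleP; exists p.
have h2 := d_edge ez. lia.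
Qed.

Definition par x := if x == v then v else odflt v [pick y | e x y && ((d y).+1 == d x)].

Lemma par_v : par v = v.
Proof. by rewrite /par eqxx. Qed.

Lemma par_spec x : x != v -> e x (par x) /\ (d (par x)).+1 = d x.
Proof.
move=> xv; rewrite /par (negbTE xv); case: pickP => [y /andP [exy /eqP]|none] //=.
by case: (d_par_ex xv) => y exy dy; move: (none y); rewrite exy dy eqxx.
Qed.

Lemma d_par x : d (par x) = (d x).-1.
Proof.
case: (eqVneq x v) => [->|xv]; first by rewrite par_v d_v.
by case: (par_spec xv) => _ <-.
Qed.

Lemma not_in_low x s D : all (fun w => d w <= D) s -> D < d x -> x \notin s.
Proof. move=> H H'; apply/negP => xs; have := allP H x xs; by rewrite leqNgt H'. Qed.

Lemma same_depth_path D : forall y z, d y = D -> d z = D -> y != z ->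
  exists s, [/\ path e y s, last y s = z, uniq (y :: s),
     all (fun w => d w <= D) (y :: s) & 2 <= size s].
Proof.
elim: D => [|D IH] y z dy dz yz.
  by rewrite (d0 dy) (d0 dz) eqxx in yz.
have yv : y != v by apply/eqP => H; rewrite H d_v in dy.
have zv : z != v by apply/eqP => H; rewrite H d_v in dz.
case: (par_spec yv) => ey dpy; case: (par_spec zv) => ez dpz.
case: (eqVneq (par y) (par z)) => pyz.
  exists [:: par y; z]; split => //=.
  - by rewrite ey pyz esym ez.
  - have h1 : y != par y by apply/eqP => H; rewrite -H in dpy; lia.
    have h2 : par y != z by apply/eqP => H; rewrite H in dpy; lia.
    by rewrite !inE !negb_or h1 yz h2.
  - rewrite dy dz; apply/and4P; split => //; lia.
have [s [ps ls us als ss]] := IH (par y) (par z) ltac:(lia) ltac:(lia) pyz.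
exists (par y :: rcons s z); split.
- by rewrite /= ey rcons_path ps ls esym ez.
- by rewrite /= last_rcons.
- have hy : y \notin par y :: s by apply: (not_in_low als); lia.
  have hz : z \notin par y :: s by apply: (not_in_low als); lia.
  by rewrite -rcons_cons cons_uniq rcons_uniq us hz mem_rcons in_cons negb_or yz hy.
- have als' : all (fun w => d w <= D.+1) (par y :: s) by apply: sub_all als => w /= H; lia.
  rewrite /= dy leqnn /= -cats1 all_cat /= dz leqnn andbT.
  by move: als' => /= /andP [-> ->].
- by rewrite /= size_rcons; lia.
Qed.

Lemma no_level_edge x y : e x y -> d x != d y.
Proof.
move=> exy; apply/eqP => dxy.
have xy : x != y by apply/eqP => H; rewrite H eirr in exy.
have [s [ps ls us _ ss]] := same_depth_path dxy erefl xy.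
have := eacyc us; rewrite /= ltnS ss => /(_ isT); apply/negP.
by rewrite /= rcons_path ps ls esym exy.
Qed.

Lemma par_unique x y : e x y -> (d y).+1 = d x -> y = par x.
Proof.
move=> exy dyx.
have xv : x != v by apply/eqP => H; rewrite H d_v in dyx.
case: (par_spec xv) => exz dz.
apply/eqP/negPn/negP => yz.
have [s [ps ls us als ss]] := same_depth_path (D := d y) (y:=y) (z:=par x) erefl ltac:(lia) yz.
have hx : x \notin y :: s by apply: (not_in_low als); lia.
have := eacyc (c := x :: y :: s); rewrite cons_uniq hx us /= => /(_ isT).
have -> : 2 < (size s).+2 by lia.
move=> /(_ isT); apply/negP.
by rewrite /= exy rcons_path ps ls esym exz.
Qed.

Lemma edge_par x y : e x y -> y = par x \/ x = par y.
Proof.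
move=> exy; have h1 := d_edge exy; have h2 := d_edge (y:=x) (x:=y) ltac:(by rewrite esym).
have h3 := no_level_edge exy.
case: (ltngtP (d x) (d y)) => H.
- by right; apply: par_unique; [rewrite esym| lia].
- by left; apply: par_unique; [|lia].
- by rewrite H eqxx in h3.
Qed.

Definition anc x y := y \in traject par x (d x).+1.

Lemma d_iter k x : d (iter k par x) = d x - k.
Proof. elim: k => [|k IH]; first by rewrite subn0. by rewrite iterS d_par IH subnS. Qed.

Lemma iter_top k x : d x <= k -> iter k par x = v.
Proof. by move=> H; apply: d0; rewrite d_iter; lia. Qed.

Lemma ancP x y : reflect (exists k, iter k par x = y) (anc x y).
Proof.
apply: (iffP trajectP) => [[i _ ->]|[k <-]]; first by exists i.
case: (leqP k (d x)) => H; first by exists k.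
by exists (d x) => //; rewrite (iter_top (leqnn _)) iter_top //; lia.
Qed.

Lemma anc_refl x : anc x x.
Proof. by apply/ancP; exists 0. Qed.
Lemma anc_par x : anc x (par x).
Proof. by apply/ancP; exists 1. Qed.
Lemma anc_trans x y z : anc x y -> anc y z -> anc x z.
Proof. move=> /ancP [i <-] /ancP [j <-]; apply/ancP; exists (j + i); by rewrite iterD. Qed.
Lemma anc_step x y : anc x y -> x != y -> anc (par x) y.
Proof.
move=> /ancP [[|k] <-]; first by rewrite eqxx.
by move=> _; apply/ancP; exists k; rewrite iterSr.
Qed.
Lemma anc_antisym x y : anc x y -> anc y x -> x = y.
Proof.
move=> /ancP [i Hi] /ancP [j Hj].
have H : iter (j + i) par x = x by rewrite iterD Hi.
case: i Hi {H} (H) => [|i] Hi H; first by rewrite -Hi.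
have := congr1 d H; rewrite d_iter => H2.
have xv : x = v by apply: d0; lia.
by rewrite -Hi xv iter_top // d_v.
Qed.
Lemma anc_total x y z : anc x y -> anc x z -> anc y z \/ anc z y.
Proof.
move=> /ancP [i <-] /ancP [j <-].
case: (leqP i j) => H.
  by left; apply/ancP; exists (j - i); rewrite -iterD subnK.
by right; apply/ancP; exists (i - j); rewrite -iterD subnK //; lia.
Qed.

Lemma down_path q : forall x y, par y = x -> path e y q -> uniq (x :: y :: q) -> last y q != v.
Proof.
elim: q => [|z q IH] x y pyx /=.
  move=> _ /andP [H _]; apply/eqP => yv; move: H; by rewrite -pyx yv par_v inE eqxx.
move=> /andP [eyz pz] /andP [xn /andP [yn uq]].
case: (edge_par eyz) => H.
  by move: xn; rewrite H pyx !inE eqxx orbT.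
apply: (IH _ _ (sym_eq H) pz); by rewrite /= yn uq.
Qed.

Lemma anc_in_path q : forall x, path e x q -> uniq (x :: q) -> last x q = v ->
  forall k, iter k par x \in x :: q.
Proof.
elim: q => [|y q IH] x /=.
  by move=> _ _ -> k; rewrite iter_top ?d_v // inE.
move=> /andP [exy pq] /andP [xn uq] lq k.
case: (eqVneq x v) => xv.
  by move: xn; rewrite xv -lq mem_last.
case: (edge_par exy) => H.
  case: k => [|k]; first by rewrite inE eqxx.
  by rewrite iterSr -H in_cons (IH y pq uq lq) orbT.
have := down_path (x:=x) (y:=y) (q:=q) (sym_eq H) pq.
by rewrite /= xn uq lq eqxx andbT => /(_ ltac:(by rewrite in_cons negb_or in xn; case/andP: xn)).
Qed.

Lemma anc_desc x y : anc x y -> descendant e v x y.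
Proof. by move=> /ancP [k <-] p pp lp up; apply: anc_in_path. Qed.


Lemma cnbhdE x y : (y \in cnbhd e x) = (y == x) || e x y.
Proof. by rewrite inE. Qed.

Lemma domP (S : {set T}) : reflect (forall x, exists2 y, y \in S & (y == x) || e x y) (dominating e S).
Proof.
apply: (iffP forallP) => H x.
  by have /set0Pn [y] := H x; rewrite inE cnbhdE => /andP [h1 h2]; exists y.
by apply/set0Pn; case: (H x) => y yS yx; exists y; rewrite inE cnbhdE yx yS.
Qed.

Lemma domW (S : {set T}) : dominating e S -> forall x, exists2 y, y \in S & (y == x) || e x y.
Proof. by move/domP. Qed.

Lemma undomP (S : {set T}) : ~~ dominating e S -> exists q, forall y, y \in S -> ~~ ((y == q) || e q y).
Proof.
move=> H; case: (pickP (fun q => ~~ [exists y in S, (y == q) || e q y])) => [q Hq|none].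
  by exists q => y yS; move: Hq => /existsPn /(_ y); rewrite yS.
exfalso; move/negP: H; apply; apply/domP => x.
have := none x; rewrite /= negbK => /existsP [z /andP [h1 h2]]; by exists z.
Qed.

Lemma not_dom_at (S : {set T}) q : (forall y, y \in S -> ~~ ((y == q) || e q y)) -> ~~ dominating e S.
Proof. by move=> H; apply/negP => /domP /(_ q) [y /H /negP]. Qed.

Lemma dom_sub (S S' : {set T}) : S \subset S' -> dominating e S -> dominating e S'.
Proof.
move=> sub /domP H; apply/domP => x; case: (H x) => y yS yx; exists y => //.
exact: (subsetP sub).
Qed.

Lemma critE (S : {set T}) x : (x \in crit e S) = (x \in S) && ~~ dominating e (S :\ x).
Proof. by rewrite inE. Qed.

Lemma suppE (S : {set T}) x : (x \in supported e S) = (x \in S) && dominating e (S :\ x).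
Proof. rewrite /supported in_setD critE; by case: (x \in S); rewrite /= ?andbF ?negbK ?andbT. Qed.

Lemma supp_crit (S : {set T}) x : x \in supported e S -> x \notin crit e S.
Proof. by rewrite /supported in_setD => /andP []. Qed.

Lemma nb_sym x y : ((y == x) || e x y) = ((x == y) || e y x).
Proof. by rewrite eq_sym esym. Qed.

Definition Inv (M : {set T}) := [/\ dominating e M,
  (forall u, u \in supported e M -> u != v -> par u \notin M) &
  (forall u w, u \in supported e M -> w \in supported e M -> u != w -> ~~ anc u w)].

Definition Phi (M : {set T}) := [set x | [exists w in supported e M, anc x w]].

Definition AA M u := [set x in a1 e M | e u x].
Definition NN M u := [set y in N1 e M | [exists x in AA M u, e y x]].
Definition step M u := M :\: AA M u :|: NN M u.

Section Step.
Variables (M : {set T}) (u : T).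
Hypothesis IM : Inv M.
Hypothesis uS : u \in supported e M.

Let A := AA M u.
Let N := NN M u.
Let M' := step M u.

Let dM : dominating e M. Proof. by case: IM. Qed.
Let aM : forall u, u \in supported e M -> u != v -> par u \notin M. Proof. by case: IM. Qed.
Let bM : forall u w, u \in supported e M -> w \in supported e M -> u != w -> ~~ anc u w.
Proof. by case: IM. Qed.

Let uM : u \in M. Proof. by move: uS; rewrite suppE => /andP []. Qed.

Lemma Acrit x : x \in A -> x \in crit e M.
Proof. by rewrite /A /AA in_set => /andP [h _]; move: h; rewrite /a1 in_set => /andP [h _]. Qed.

Lemma AinM x : x \in A -> x \in M.
Proof. by move=> /Acrit; rewrite critE => /andP []. Qed.

Lemma uA : u \notin A.
Proof. apply/negP => /Acrit; by move: (supp_crit uS) => /negP. Qed.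

Lemma Mchild x : x \in M -> e u x -> par x = u.
Proof.
move=> xM eux; case: (edge_par eux) => // H.
have uv : u != v by apply/eqP => uv; move: eux; rewrite H uv par_v eirr.
by move: (aM uS uv); rewrite -H xM.
Qed.

Lemma inA x : (x \in A) = (x \in M) && e u x.
Proof.
apply/idP/idP.
  by move=> H; rewrite (AinM H); move: H; rewrite /A /AA inE => /andP [].
move=> /andP [xM eux].
have px := Mchild xM eux.
have xc : x \in crit e M.
  rewrite critE xM /=; apply/negP => dx.
  have xS : x \in supported e M by rewrite suppE xM dx.
  have xu : x != u by apply/eqP => H; move: eux; rewrite H eirr.
  by move: (bM xS uS xu); rewrite -px anc_par.
move: (xc); rewrite critE => /andP [_ nd].
have [q Hq] := undomP nd.
have xq : (x == q) || e q x.
  case: (domW dM q) => y yM yq; case: (eqVneq y x) => [<-|yx] //.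
  by have := Hq y; rewrite in_setD1 yx yM yq => /(_ isT).
have ux : u != x by apply/eqP => H; move: eux; rewrite H eirr.
have qx : q != x.
  apply/eqP => qx; have := Hq u; rewrite in_setD1 uM ux qx esym eux orbT.
  by move=> /(_ isT).
have qM : q \notin M.
  by apply/negP => qM; have := Hq q; rewrite in_setD1 qM qx eqxx => /(_ isT).
have cardq : cnbhd e q :&: M = [set x].
  apply/setP => y; rewrite !inE; case: (eqVneq y x) => [->|yx] /=; first by rewrite xq xM.
  apply/negP => /andP [h1 h2]; have := Hq y; rewrite in_setD1 yx h2 h1; by move=> /(_ isT).
rewrite /A /AA inE eux andbT /a1 inE xc /=; apply/set0Pn; exists q.
rewrite inE cnbhdE nb_sym xq /N1 inE in_setC qM cardq cards1 eqxx //.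
Qed.

Lemma Apar x : x \in A -> par x = u /\ x != v.
Proof.
move=> xA; move: (xA); rewrite inA => /andP [xM eux].
have px := Mchild xM eux; split => //.
by apply/eqP => xv; move: eux; rewrite -px xv par_v eirr.
Qed.

Lemma inN y : y \in N ->
  [/\ y \notin M, par y \in A, y != v & forall z, z \in M -> (z == y) || e y z -> z = par y].
Proof.
rewrite /N /NN in_set => /andP [yN1 /existsP [x /andP [xA eyx]]].
move: yN1; rewrite /N1 in_set in_setC => /andP [yM /cards1P [z Hz]].
have xM := AinM xA.
have uniqz : forall w, w \in M -> (w == y) || e y w -> w = z.
  move=> w wM wy; have : w \in cnbhd e y :&: M by rewrite inE cnbhdE wy wM.
  by rewrite Hz inE => /eqP.
have xz := uniqz x xM ltac:(by rewrite eyx orbT).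
case: (edge_par eyx) => H.
  have yv : y != v.
    by apply/eqP => yv; move: yM; rewrite -(_ : x = y) ?xM // H yv par_v.
  split => //; first by rewrite -H.
  by move=> w wM wy; rewrite -H xz; exact: uniqz.
by move: yM; rewrite H (Apar xA).1 uM.
Qed.

Lemma toN x y : x \notin M -> y \in A -> e x y ->
  (forall z, z \in M -> (z == x) || e x z -> z = y) -> x \in N.
Proof.
move=> xM yA exy Hz.
rewrite /N /NN in_set; apply/andP; split; last by apply/existsP; exists y; rewrite yA exy.
rewrite /N1 in_set in_setC xM /=; apply/cards1P; exists y; apply/setP => z.
rewrite !inE; apply/andP/eqP => [[h1 h2]|->]; first exact: Hz.
by rewrite exy orbT (AinM yA).
Qed.

Lemma inM' z : (z \in M') = ((z \in M) && (z \notin A)) || (z \in N).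
Proof. by rewrite /M' /step in_setU in_setD andbC. Qed.

Lemma NnotM y : y \in N -> y \notin M.
Proof. by case/inN. Qed.

Lemma AnotM' a : a \in A -> a \notin M'.
Proof.
move=> aA; rewrite inM' aA andbF /=; apply/negP => /NnotM.
by rewrite (AinM aA).
Qed.

Lemma domM' : dominating e M'.
Proof.
apply/domP => x.
case: (boolP [exists z in M, ((z == x) || e x z) && (z \notin A)]).
  move=> /existsP [z /andP [zM /andP [zx zA]]]; exists z => //.
  by rewrite inM' zM zA.
move=> /existsPn Hn.
have Hn' : forall z, z \in M -> (z == x) || e x z -> z \in A.
  by move=> z zM zx; have := Hn z; rewrite zM zx /= => /negPn.
case: (domW dM x) => y yM yx; have yA := Hn' y yM yx.
case: (boolP (x \in M)) => xM.
  have xA := Hn' x xM ltac:(by rewrite eqxx).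
  exists u; first by rewrite inM' uM uA.
  by move: xA; rewrite inA => /andP [_ eux]; rewrite esym eux orbT.
exists x; last by rewrite eqxx.
have yx' : y != x by apply/eqP => H; move: xM; rewrite -H yM.
have exy : e x y by move: yx; rewrite (negbTE yx').
have ypar : y = par x.
  case: (edge_par exy) => // H; exfalso.
  by move: xM; rewrite H (Apar yA).1 uM.
have : x \in N.
  apply: (toN xM yA exy) => z zM zx.
  have zA := Hn' z zM zx.
  have zx' : z != x by apply/eqP => H; move: xM; rewrite -H zM.
  have exz : e x z by move: zx; rewrite (negbTE zx').
  case: (edge_par exz) => H; first by rewrite H ypar.
  by move: xM; rewrite H (Apar zA).1 uM.
by rewrite inM' => ->; rewrite orbT.
Qed.

Lemma u_crit' : u \in crit e M'.
Proof.
rewrite critE inM' uM uA /=; apply: (@not_dom_at _ u) => y; rewrite in_setD1 => /andP [yu yM'].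
rewrite (negbTE yu) /=; apply/negP => euy.
case: (edge_par euy) => H.
  have uv : u != v by apply/eqP => uv; move: yu; rewrite H uv par_v eqxx.
  move: yM'; rewrite inM' => /orP [/andP [yM _]|yN].
    by move: (aM uS uv); rewrite -H yM.
  have [_ pyA _ _] := inN yN; have [ppy _] := Apar pyA.
  have := congr1 d ppy; rewrite H !d_par => h.
  have : d u != 0 by apply/eqP => /d0 h'; rewrite h' eqxx in uv.
  lia.
move: yM'; rewrite inM' => /orP [/andP [yM yA]|yN].
  by move: yA; rewrite inA yM euy.
by have [_ pyA _ _] := inN yN; move: pyA; rewrite -H (negbTE uA).
Qed.

Lemma N_crit' y : y \in N -> y \in crit e M'.
Proof.
move=> yN; have [yM pyA yv Hy] := inN yN.
rewrite critE inM' yN orbT /=; apply: (@not_dom_at _ y) => z; rewrite in_setD1 => /andP [zy zM'].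
rewrite (negbTE zy) /=; apply/negP => eyz.
move: zM'; rewrite inM' => /orP [/andP [zM zA]|zN].
  have := Hy z zM; rewrite eyz orbT => /(_ isT) H.
  by move: zA; rewrite H pyA.
case: (edge_par eyz) => H.
  by move: (NnotM zN); rewrite H (AinM pyA).
by have [_ pzA _ _] := inN zN; move: yM; rewrite H (AinM pzA).
Qed.

Definition Ds x := anc x u && (x != u).

Lemma N_D y : y \in N -> Ds y.
Proof.
move=> yN; have [yM pyA _ _] := inN yN; have [ppy _] := Apar pyA.
rewrite /Ds; apply/andP; split; first by apply/ancP; exists 2.
by apply/eqP => yu; move: yM; rewrite yu uM.
Qed.

Lemma D_closed x y : Ds x -> e x y -> Ds y \/ y = u.
Proof.
move=> /andP [xu xnu] exy; case: (edge_par exy) => H.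
  have := anc_step xu xnu; rewrite -H => yu'.
  case: (eqVneq y u) => [->|ynu]; first by right.
  by left; rewrite /Ds yu' ynu.
left; have yx : anc y x by rewrite H anc_par.
rewrite /Ds (anc_trans yx xu) /=; apply/eqP => yu.
have xpu : x = par u by rewrite H yu.
have pu : u = par u by apply: anc_antisym (anc_par u) _; rewrite -xpu.
by move: xnu; rewrite xpu -pu eqxx.
Qed.

Lemma F5 w : w \in supported e M' -> ~~ Ds w -> w \in supported e M /\ w != u.
Proof.
move=> wS nD; move: (wS); rewrite suppE => /andP [wM' dw].
have wN : w \notin N by apply/negP => /N_D; apply/negP.
have wM : w \in M by move: wM'; rewrite inM' (negbTE wN) orbF => /andP [].
have wu : w != u by apply/eqP => wu; move: (supp_crit wS); rewrite wu u_crit'.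
split => //; rewrite suppE wM /=; apply/domP => x.
case: (domW dw x) => z; rewrite in_setD1 => /andP [zw zM'] zx.
move: zM'; rewrite inM' => /orP [/andP [zM _]|zN].
  by exists z => //; rewrite in_setD1 zw zM.
case: (domW dM x) => m mM mx.
case: (eqVneq m w) => [mw|mw]; last by exists m; rewrite // in_setD1 mw mM.
have Dz := N_D zN.
have Hx : Ds x \/ x = u.
  move: zx => /orP [/eqP <-|exz]; first by left.
  by apply: (D_closed Dz); rewrite esym.
case: Hx => [Dx|->]; last by exists u; rewrite ?eqxx // in_setD1 eq_sym wu uM.
exfalso; move: mx; rewrite mw => /orP [/eqP wx|exw].
  by move: nD; rewrite wx Dx.
by case: (D_closed Dx exw) => [Dw|wu']; [move: nD; rewrite Dw | move: wu; rewrite wu' eqxx].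
Qed.

Lemma F6 w : w \in supported e M' -> Ds w -> [/\ par w \notin M', par (par w) \in N & w != v].
Proof.
move=> wS Dw; move: (wS); rewrite suppE => /andP [wM' dw].
have wN : w \notin N by apply/negP => /N_crit' wc; move: (supp_crit wS); rewrite wc.
have /andP [wM wA] : (w \in M) && (w \notin A) by move: wM'; rewrite inM' (negbTE wN) orbF.
have wc : w \in crit e M.
  rewrite critE wM /=; apply/negP => dw0.
  have wS0 : w \in supported e M by rewrite suppE wM dw0.
  move: Dw => /andP [wu wnu]; by move: (bM wS0 uS wnu); rewrite wu.
move: wc; rewrite critE wM /= => nd; have [q Hq] := undomP nd.
have wq : (w == q) || e q w.
  case: (domW dM q) => y yM yq; case: (eqVneq y w) => [<-|yw] //.
  by have := Hq y; rewrite in_setD1 yw yM yq => /(_ isT).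
case: (domW dw q) => r; rewrite in_setD1 => /andP [rw rM'] rq.
have rN : r \in N.
  move: rM'; rewrite inM' => /orP [/andP [rM _]|//].
  by move: (Hq r); rewrite in_setD1 rw rM rq => /(_ isT).
have [rM prA rv Hr] := inN rN.
have rq' : r != q.
  apply/eqP => rq0; have := Hr w wM; rewrite rq0 wq => /(_ isT) H.
  by move: wA; rewrite H -rq0 prA.
have eqr : e q r by move: rq; rewrite (negbTE rq').
have prq : r = par q.
  case: (edge_par eqr) => // H; exfalso.
  have qw : q != w by apply/eqP => H'; move: wA; rewrite -H' H prA.
  by move: (Hq q); rewrite in_setD1 qw H (AinM prA) -H eqxx => /(_ isT).
have qM : q \notin M.
  apply/negP => qM; case: (eqVneq q w) => qw.
    have := Hr w wM; rewrite -qw esym eqr orbT => /(_ isT) H.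
    have h1 : anc q r by rewrite prq anc_par.
    have h2 : anc r q by rewrite H anc_par.
    have qr := anc_antisym h1 h2; by move: rM; rewrite -qr qM.
  by move: (Hq q); rewrite in_setD1 qw qM eqxx => /(_ isT).
have qw : q != w by apply/eqP => H; move: qM; rewrite H wM.
have eqw : e q w by move: wq; rewrite eq_sym (negbTE qw).
have pwq : q = par w.
  case: (edge_par eqw) => // H; exfalso.
  by move: rM; rewrite prq -H wM.
have wv : w != v by apply/eqP => wv; move: qM; rewrite pwq wv par_v -wv wM.
split => //; last by rewrite -pwq -prq.
rewrite -pwq inM' (negbTE qM) /=; apply/negP => qN.
by have [_ pqA _ _] := inN qN; move: rM; rewrite prq (AinM pqA).
Qed.

Lemma F7 w : w \in supported e M' -> w != v -> par w \notin M'.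
Proof.
move=> wS wv; case: (boolP (Ds w)) => Dw; first by case: (F6 wS Dw).
have [wS0 wu] := F5 wS Dw.
rewrite inM' (negbTE (aM wS0 wv)) /=; apply/negP => pN.
have := N_D pN => /andP [pu pnu].
by move: Dw; rewrite /Ds (anc_trans (anc_par w) pu) wu.
Qed.

Lemma F8 w1 w2 : w1 \in supported e M' -> w2 \in supported e M' -> w1 != w2 -> ~~ anc w1 w2.
Proof.
move=> S1 S2 w12; apply/negP => a12.
have w2c : w2 \notin crit e M' := supp_crit S2.
have w2M' : w2 \in M' by move: S2; rewrite suppE => /andP [].
have key : ~ anc u w2.
  move=> auw; case: (boolP (Ds w2)) => D2.
    move: D2 => /andP [wu wnu]; by rewrite (anc_antisym auw wu) eqxx in wnu.
  have [S2' w2u] := F5 S2 D2.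
  by move: (bM uS S2' ltac:(by rewrite eq_sym)); rewrite auw.
case: (boolP (Ds w1)) => D1.
  have [pM' ppN w1v] := F6 S1 D1.
  have [ppM pppA _ _] := inN ppN; have [pppp _] := Apar pppA.
  have s1 := anc_step a12 w12.
  have s2 := anc_step s1 ltac:(by apply/eqP => H; move: pM'; rewrite H w2M').
  have s3 := anc_step s2 ltac:(by apply/eqP => H; move: w2c; rewrite -H N_crit').
  have s4 := anc_step s3 ltac:(by apply/eqP => H; move: w2M'; rewrite -H (negbTE (AnotM' pppA))).
  by rewrite pppp in s4; apply: key.
have [S1' w1u] := F5 S1 D1.
case: (boolP (Ds w2)) => D2.
  move: D2 => /andP [a2u _]; by move: D1; rewrite /Ds (anc_trans a12 a2u) w1u.
have [S2' _] := F5 S2 D2.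
by move: (bM S1' S2' w12); rewrite a12.
Qed.

Lemma step_inv : Inv M'.
Proof. by split; [exact: domM' | exact: F7 | exact: F8]. Qed.

Lemma step_phi : Phi M' \proper Phi M.
Proof.
apply/properP; split.
  apply/subsetP => x; rewrite !inE => /existsP [w /andP [wS axw]]; apply/existsP.
  case: (boolP (Ds w)) => Dw.
    by exists u; rewrite uS; move: Dw => /andP [wu _]; exact: anc_trans axw wu.
  have [wS0 _] := F5 wS Dw; by exists w; rewrite wS0 axw.
exists u; first by rewrite inE; apply/existsP; exists u; rewrite uS anc_refl.
rewrite inE; apply/existsPn => w; apply/negP => /andP [wS auw].
case: (boolP (Ds w)) => Dw.
  move: Dw => /andP [wu wnu]; by rewrite (anc_antisym auw wu) eqxx in wnu.
have [wS0 wu] := F5 wS Dw.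
by move: (bM uS wS0 ltac:(by rewrite eq_sym)); rewrite auw.
Qed.

Lemma step_card : #|M| <= #|M'|.
Proof.
have sub : A \subset [set par y | y in N].
  apply/subsetP => a aA.
  move: (aA); rewrite /A /AA in_set => /andP [a1a eua].
  move: a1a; rewrite /a1 in_set => /andP [ac /set0Pn [z]].
  rewrite in_setI cnbhdE => /andP [za zN1].
  have aMM := AinM aA.
  move: (zN1); rewrite /N1 in_set in_setC => /andP [zM _].
  have eaz : e a z by move: za => /orP [/eqP zaeq|//]; move: zM; rewrite zaeq aMM.
  have zN : z \in N.
    rewrite /N /NN in_set zN1 /=; apply/existsP; exists a; by rewrite aA esym eaz.
  have [_ _ _ Hz] := inN zN.
  have -> : a = par z by apply: Hz; rewrite // esym eaz orbT.
  exact: imset_f.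
have h1 := subset_leq_card sub.
have h2 : #|[set par y | y in N]| <= #|N| := leq_imset_card _ _.
have h3 := cardsID A M.
have h4 : #|M :&: A| <= #|A| by apply: subset_leq_card; apply: subsetIr.
have h5 : #|M'| = #|M :\: A| + #|N|.
  rewrite /M' /step cardsU.
  have -> : (M :\: AA M u) :&: NN M u = set0.
    apply/eqP; apply/negPn; apply/negP => /set0Pn [y]; rewrite in_setI in_setD => /andP [/andP [_ yM] yN].
    by move: (NnotM yN); rewrite yM.
  by rewrite cards0 subn0.
lia.
Qed.

End Step.

Lemma acc_inv n : forall M, Inv M -> #|Phi M| < n -> Acc (fun M' M => alg_step e v M M') M.
Proof.
elim: n => [//|n IH] M IM HM; constructor => M' [_ [u [uS [_ Heq]]]].
have HM' : M' = step M u by exact: Heq.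
subst; apply: IH; first exact: step_inv.
have := proper_card (step_phi IM uS); lia.
Qed.

Lemma crt_inv M1 M2 : clos_refl_trans _ (alg_step e v) M1 M2 -> Inv M1 -> Inv M2 /\ #|M1| <= #|M2|.
Proof.
elim => [x y [_ [u [uS [_ Heq]]]] Ix | x Ix | x y z _ IH1 _ IH2 Ix].
- have -> : y = step x u by exact: Heq.
  by split; [exact: step_inv | exact: step_card].
- by split.
- case: (IH1 Ix) => Iy c1; case: (IH2 Iy) => Iz c2; split => //; exact: leq_trans c1 c2.
Qed.

Lemma final M : Inv M -> (forall M', ~ alg_step e v M M') -> minimal_dominating e M.
Proof.
move=> IM Hno; have dM : dominating e M by case: IM.
split => // S' /properP [sub [x xM xS]]; apply/negP => dS.
have dx : dominating e (M :\ x).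
  apply: dom_sub dS; apply/subsetP => y yS; rewrite in_setD1 (subsetP sub y yS) andbT.
  by apply/eqP => yx; move: xS; rewrite -yx yS.
have xSup : x \in supported e M by rewrite suppE xM dx.
have [u uS umin] : exists2 u, u \in supported e M & forall w, w \in supported e M -> d u <= d w.
  by case: (arg_minnP d xSup) => w wS wmin; exists w.
apply: (Hno (step M u)); split.
  move=> [_ Hmin]; have := Hmin (M :\ x) (properD1 xM); by rewrite dx.
exists u; split => //; split => // w wS n /dleP Hw.
have h := d_min Hw; have h' := umin w wS.
have /dleP [p [sp [pp lp]]] := dleD u.
exists p; split => //; lia.
Qed.

Lemma main_sec M0 :
  dominating e M0 ->
  (forall u y, u \in supported e M0 -> parent_of e v u y -> y \notin M0) ->
  (forall u w, u \in supported e M0 -> w \in supported e M0 -> u != w ->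
     ~ descendant e v u w) ->
  Acc (fun M' M => alg_step e v M M') M0 /\
  (forall M : {set T}, clos_refl_trans _ (alg_step e v) M0 M ->
     (forall M', ~ alg_step e v M M') ->
     minimal_dominating e M /\ #|M0| <= #|M|).
Proof.
move=> dM0 Ha Hb.
have IM0 : Inv M0.
  split => //.
    move=> u uS uv; apply: (Ha u (par u) uS); split => //; split.
      by case: (par_spec uv).
    exact: anc_desc (anc_par u).
  move=> u w uS wS uw; apply/negP => auw; exact: (Hb u w uS wS uw (anc_desc auw)).
split; first exact: (@acc_inv (#|Phi M0|.+1) M0 IM0 (ltnSn _)).
move=> M HM Hno; have [IM c] := crt_inv HM IM0; split => //; exact: final IM Hno.
Qed.

End Tree.
Unset Implicit Arguments.
Unset Strict Implicit.

Theorem theorem4p4 (T : finType) (e : rel T) (v : T) (M0 : {set T}) :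
  is_tree e ->
  dominating e M0 ->
  (* (a) no parent of a supported vertex of M0 lies in M0 *)
  (forall u y, u \in supported e M0 -> parent_of e v u y -> y \notin M0) ->
  (* (b) no supported vertex is a descendant of another supported vertex *)
  (forall u w, u \in supported e M0 -> w \in supported e M0 -> u != w ->
     ~ descendant e v u w) ->
  (* termination: no infinite run of the loop, whatever the choices *)
  Acc (fun M' M => alg_step e v M M') M0 /\
  (* when the loop stops (no step possible), M_i is minimal dominating and
     at least as large as M0 *)
  (forall M : {set T}, clos_refl_trans _ (alg_step e v) M0 M ->
     (forall M', ~ alg_step e v M M') ->
     minimal_dominating e M /\ #|M0| <= #|M|).
Proof.
move=> [es [ei [ec ea]]]; exact: (main_sec es ei ec ea).
Qed.
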